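(* Let $G$ be split with root system of type $G_2$, simple roots $\alpha_1$ (short) and $\alpha_2$ (long), and let $\widetilde G$ be an $n$-fold Brylinski--Deligne cover associated with a Weyl-invariant quadratic form $Q$. If $n_{\alpha_2}=3n_{\alpha_1}$, then $$f_X(\Phi_+^\vee)=f_Y(\Phi_+)=\frac{1}{3n_{\alpha_1}}\{1,4,5\}\cup\frac{1}{n_{\alpha_1}}\{1,2,3\}.$$ If $n_{\alpha_1}=n_{\alpha_2}$ $(=n_\alpha)$, then $f_X(\Phi^\vee_+)=f_Y(\Phi_+)=\frac{1}{n_\alpha}[1,5]$.
   Context: $[a,b]$ denotes $\{a,\dots,b\}$. Notation: $\omega_\alpha$ fundamental weights, $\omega^\vee_\alpha$ fundamental coweights, $\rho^\vee=\sum_{\alpha\in\Delta}\omega_\alpha^\vee$. $B_Q(y,z)=Q(y+z)-Q(y)-Q(z)$, $Y_{Q,n}=\{y\in Y:B_Q(y,z)\in n\mathbf Z\ \forall z\in Y\}$, $n_\alpha=n/\gcd(n,Q(\alpha^\vee))$, and $\tilde n_\alpha$ ($\alpha\in\Phi$) defined by $\mathbf Z\alpha^\vee\cap Y_{Q,n}=\mathbf Z\tilde n_\alpha\alpha^\vee$ (for type $G_2$ one has $\tilde n_\alpha=n_\alpha$). $f_X:\Phi_+^\vee\to\mathbf Q$, $f_X(\beta^\vee)=\sum_{\alpha\in\Delta}\langle\omega_\alpha/\tilde n_\alpha,\beta^\vee\rangle$; $f_Y:\Phi_+\to\mathbf Q$, $f_Y(\beta)=\langle\rho^\vee,\beta\rangle/\tilde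 n_\beta$. *)

(* Defs.v *)
From mathcomp Require Import all_boot all_order all_algebra.
Set Implicit Arguments. Unset Strict Implicit. Unset Printing Implicit Defensive.
Import Order.TTheory GRing.Theory Num.Theory.
Local Open Scope ring_scope.

(* Root datum of split G2 (simply connected = adjoint, so Y is the coroot
   lattice and X the root lattice).
   Y = int * int : coordinates w.r.t. the simple coroots (a1^v, a2^v).
   X = int * int : coordinates w.r.t. the simple roots (a1, a2),
   a1 short, a2 long.  Cartan pairing:
   <a1,a1^v>=2, <a1,a2^v>=-1, <a2,a1^v>=-3, <a2,a2^v>=2. *)

Definition lat := (int * int)%type.

Definition pair (x : lat) (y : lat) : int :=
  x.1 * (2 * y.1 - y.2) + x.2 * (- 3 * y.1 + 2 * y.2).

Inductive proot := r1 | r2 | r12 | r112 | r1112 | r11122.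

Definition G2pos : seq proot := [:: r1; r2; r12; r112; r1112; r11122].

Definition root (b : proot) : lat :=
  match b with
  | r1 => (1, 0) | r2 => (0, 1) | r12 => (1, 1)
  | r112 => (2, 1) | r1112 => (3, 1) | r11122 => (3, 2)
  end%R.

Definition coroot (b : proot) : lat :=
  match b with
  | r1 => (1, 0) | r2 => (0, 1) | r12 => (1, 3)
  | r112 => (2, 3) | r1112 => (1, 1) | r11122 => (1, 2)
  end%R.

(* fundamental weights (simple-root coordinates): <omega_i, a_j^v> = delta_ij *)
Definition omega1 : lat := (2, 1)%R.
Definition omega2 : lat := (3, 2)%R.
(* rho^v = omega1^v + omega2^v = (2 a1^v + 3 a2^v) + (a1^v + 2 a2^v) *)
Definition rho_vee : lat := (3, 5)%R.

Definition ladd (y z : lat) : lat := (y.1 + z.1, y.2 + z.2).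
Definition lscale (k : int) (y : lat) : lat := (k * y.1, k * y.2).

Definition refl (b : proot) (y : lat) : lat :=
  ladd y (lscale (- pair (root b) y) (coroot b)).

Definition is_quadratic (Q : lat -> int) : Prop :=
  exists a b c : int, forall y : lat, Q y = a * y.1 ^+ 2 + b * y.1 * y.2 + c * y.2 ^+ 2.

(* Weyl-invariance (W is generated by the simple reflections) *)
Definition weyl_invariant (Q : lat -> int) : Prop :=
  forall y : lat, Q (refl r1 y) = Q y /\ Q (refl r2 y) = Q y.

Definition BQ (Q : lat -> int) (y z : lat) : int := Q (ladd y z) - Q y - Q z.

Definition YQn (Q : lat -> int) (n : nat) (y : lat) : Prop :=
  forall z : lat, (n%:Z %| BQ Q y z)%Z.

Definition n_alpha (Q : lat -> int) (n : nat) (b : proot) : nat :=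
  (n %/ gcdn n `|Q (coroot b)|)%N.

(* m is tilde n_alpha:  Z alpha^v  cap  Y_{Q,n} = Z m alpha^v *)
Definition tilde_n_spec (Q : lat -> int) (n : nat) (b : proot) (m : nat) : Prop :=
  forall k : int, YQn Q n (lscale k (coroot b)) <-> (m%:Z %| k)%Z.

Definition fX (tn : proot -> nat) (b : proot) : rat :=
  (pair omega1 (coroot b))%:~R / (tn r1)%:R
  + (pair omega2 (coroot b))%:~R / (tn r2)%:R.

Definition fY (tn : proot -> nat) (b : proot) : rat :=
  (pair (root b) rho_vee)%:~R / (tn b)%:R.

(* Main.v *)
Require Import Defs.
From mathcomp Require Import all_boot all_order all_algebra.
From mathcomp Require Import ring lra zify.
Import Order.TTheory GRing.Theory Num.Theory.
Local Open Scope ring_scope.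

Lemma Qform (Q : lat -> int) : is_quadratic Q -> weyl_invariant Q ->
  exists c : int, forall y : lat, Q y = 3 * c * y.1 ^+ 2 - 3 * c * y.1 * y.2 + c * y.2 ^+ 2.
Proof.
move=> [a [b [c hQ]]] hW; exists c.
have [h1 _] := hW (0, 1)%R. have [_ h2] := hW (1, 0)%R.
move: h1 h2; rewrite !hQ /refl /ladd /lscale /pair /= => h1 h2.
have ea : a = 3 * c by lia.
have eb : b = - 3 * c by lia.
by move=> y; rewrite hQ ea eb; ring.
Qed.

Lemma BQ_key (Q : lat -> int) c :
  (forall y : lat, Q y = 3 * c * y.1 ^+ 2 - 3 * c * y.1 * y.2 + c * y.2 ^+ 2) ->
  forall b k z, BQ Q (lscale k (coroot b)) z = k * Q (coroot b) * pair (Defs.root b) z.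
Proof.
move=> hQ b k z; rewrite /BQ !hQ /pair /ladd /lscale.
by case: b => /=; ring.
Qed.

Definition zb (b : proot) : lat :=
  match b with
  | r1 => (0, -1) | r2 => (1, 2) | r12 => (0, 1)
  | r112 => (1, 0) | r1112 => (0, -1) | r11122 => (0, 1)
  end%R.

Lemma zb_ok b : pair (Defs.root b) (zb b) = 1.
Proof. by case: b. Qed.

Lemma YQn_iff (Q : lat -> int) c n :
  (forall y : lat, Q y = 3 * c * y.1 ^+ 2 - 3 * c * y.1 * y.2 + c * y.2 ^+ 2) ->
  forall b k, YQn Q n (lscale k (coroot b)) <-> (n%:Z %| k * Q (coroot b))%Z.
Proof.
move=> hQ b k; split.
  by move=> /(_ (zb b)); rewrite (@BQ_key Q c hQ) zb_ok mulr1.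
by move=> h z; rewrite (@BQ_key Q c hQ); apply: dvdz_mulr.
Qed.

Lemma tn_eq (Q : lat -> int) c n tn :
  (0 < n)%N ->
  (forall y : lat, Q y = 3 * c * y.1 ^+ 2 - 3 * c * y.1 * y.2 + c * y.2 ^+ 2) ->
  forall b, tilde_n_spec Q n b tn -> tn = n_alpha Q n b.
Proof.
move=> n0 hQ b hs.
have H k : (tn%:Z %| k)%Z <-> (n%:Z %| k * Q (coroot b))%Z.
  by rewrite -(@YQn_iff Q c n hQ); split => /hs.
rewrite /n_alpha; set M := `|Q (coroot b)|%N; set g := gcdn n M.
have g0 : (0 < g)%N by rewrite gcdn_gt0 n0.
have Hnat t : (n %| t * M)%N <-> (tn %| t)%N.
  have := H t; rewrite !dvdzE /= abszM /= -/M => ->; done.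
apply/eqP; rewrite eqn_dvd; apply/andP; split.
  apply/Hnat; rewrite mulnC /g -muln_divCA_gcd; exact: dvdn_mulr.
have : (n %| tn * M)%N by apply/Hnat.
move=> h.
have : (n %| tn * g)%N.
  rewrite /g gcdnC muln_gcdr dvdn_gcd h /=; exact: dvdn_mull.
rewrite -{1}(divnK (dvdn_gcdl n M)) -/g mulnC (mulnC tn) dvdn_pmul2l //.
Qed.

Lemma all_mem (T : eqType) (s t : seq T) : all (mem t) s -> all (mem s) t -> s =i t.
Proof. by move=> /allP st /allP ts x; apply/idP/idP; [apply: st | apply: ts]. Qed.

Theorem lemma3p6 (n : nat) (Q : lat -> int) (tn : proot -> nat) :
  (0 < n)%N -> is_quadratic Q -> weyl_invariant Q ->
  (forall b : proot, tilde_n_spec Q n b (tn b)) ->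
  ((n_alpha Q n r2 = 3 * n_alpha Q n r1)%N ->
     let m : rat := (n_alpha Q n r1)%:R in
     let S := [:: 1 / (3 * m); 4 / (3 * m); 5 / (3 * m); 1 / m; 2 / m; 3 / m] in
     [seq fX tn b | b <- G2pos] =i S /\ [seq fY tn b | b <- G2pos] =i S)
  /\
  (n_alpha Q n r1 = n_alpha Q n r2 ->
     let m : rat := (n_alpha Q n r1)%:R in
     let S := [seq k%:R / m | k <- iota 1 5] in
     [seq fX tn b | b <- G2pos] =i S /\ [seq fY tn b | b <- G2pos] =i S).
Proof.
move=> n0 hq hw hs.
have [c hQ] := @Qform Q hq hw.
have htn b : tn b = n_alpha Q n b by apply: (@tn_eq Q c) => //.
have e12 : n_alpha Q n r12 = n_alpha Q n r1 by rewrite /n_alpha !hQ /=; congr (_ %/ gcdn _ `|_|)%N; ring.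
have e112 : n_alpha Q n r112 = n_alpha Q n r1 by rewrite /n_alpha !hQ /=; congr (_ %/ gcdn _ `|_|)%N; ring.
have e1112 : n_alpha Q n r1112 = n_alpha Q n r2 by rewrite /n_alpha !hQ /=; congr (_ %/ gcdn _ `|_|)%N; ring.
have e11122 : n_alpha Q n r11122 = n_alpha Q n r2 by rewrite /n_alpha !hQ /=; congr (_ %/ gcdn _ `|_|)%N; ring.
have pos b : (0 < n_alpha Q n b)%N.
  by rewrite /n_alpha divn_gt0 ?gcdn_gt0 ?n0 // dvdn_leq // dvdn_gcdl.
set A := n_alpha Q n r1. set B := n_alpha Q n r2.
have A0 : (A%:R : rat) != 0 by rewrite pnatr_eq0 -lt0n pos.
have B0 : (B%:R : rat) != 0 by rewrite pnatr_eq0 -lt0n pos.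
have hX : [seq fX tn b | b <- G2pos] =
  [:: 1 / A%:R; 1 / B%:R; 1 / A%:R + 3 / B%:R; 2 / A%:R + 3 / B%:R; 1 / A%:R + 1 / B%:R; 1 / A%:R + 2 / B%:R].
  rewrite /= /fX /= !htn -/A -/B /pair /omega1 /omega2 /=.
  congr [:: _; _; _; _; _; _]; field; by rewrite A0 B0.
have hY : [seq fY tn b | b <- G2pos] =
  [:: 1 / A%:R; 1 / B%:R; 2 / A%:R; 3 / A%:R; 4 / B%:R; 5 / B%:R].
  rewrite /= /fY /= !htn e12 e112 e1112 e11122 -/A -/B /pair /rho_vee /=.
  congr [:: _; _; _; _; _; _]; field; by rewrite ?A0 ?B0.
split.
- move=> eB m S.
  have eBr : (B%:R : rat) = 3 * A%:R by rewrite eB natrM.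
  have m0 : m != 0 by [].
  have -> : [seq fX tn b | b <- G2pos] = [:: 1 / m; 1 / (3 * m); 2 / m; 3 / m; 4 / (3 * m); 5 / (3 * m)].
    rewrite hX eBr /m; congr [:: _; _; _; _; _; _]; field; by rewrite A0.
  have -> : [seq fY tn b | b <- G2pos] = [:: 1 / m; 1 / (3 * m); 2 / m; 3 / m; 4 / (3 * m); 5 / (3 * m)].
    by rewrite hY eBr.
  by split; apply: all_mem; rewrite /S /= !inE !eqxx ?orbT.
- move=> eB m S.
  have m0 : m != 0 by [].
  have -> : [seq fX tn b | b <- G2pos] = [:: 1%:R / m; 1%:R / m; 4%:R / m; 5%:R / m; 2%:R / m; 3%:R / m].
    rewrite hX -eB /m; congr [:: _; _; _; _; _; _]; field; by rewrite A0.
  have -> : [seq fY tn b | b <- G2pos] = [:: 1%:R / m; 1%:R / m; 2%:R / m; 3%:R / m; 4%:R / m; 5%:R / m].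
    by rewrite hY -eB.
  by split; apply: all_mem; rewrite /S /= !inE !eqxx ?orbT.
Qed.
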